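(* (i) If $\alpha<0$, there is a $\mathrm{TN}_3$ function $\Lambda:\mathbb{R}\to(0,\infty)$ such that $\Lambda^\alpha$ is not $\mathrm{TN}_3$ (e.g. $\Lambda(x)=e^{-x^2}$). (ii) Let $\alpha\ge0$, with the convention $0^0:=0$. Then $\Lambda^\alpha$ is $\mathrm{TN}_3$ for every $\mathrm{TN}_3$ function $\Lambda:\mathbb{R}\to\mathbb{R}$ if and only if $\alpha\ge1$.
   Context: A function $\Lambda:\mathbb{R}\to\mathbb{R}$ is $\mathrm{TN}_p$ if for all $1 \le r \le p$ and all real $x_1<\dots<x_r$, $y_1<\dots<y_r$, $\det(\Lambda(x_j-y_k))_{j,k=1}^r \ge 0$. $\Lambda^\alpha$ means $x\mapsto\Lambda(x)^\alpha$ (note $\mathrm{TN}_3$ functions are non-negative). *)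

(* Defs.v *)
From HB Require Import structures.
From mathcomp Require Import all_boot all_order all_algebra.
From mathcomp Require Import all_classical all_reals exp.
Set Implicit Arguments. Unset Strict Implicit. Unset Printing Implicit Defensive.
Import Order.TTheory GRing.Theory Num.Theory.
Local Open Scope ring_scope.

Definition TN (R : realType) (p : nat) (L : R -> R) : Prop :=
  forall r : nat, (1 <= r <= p)%N ->
  forall x y : 'I_r -> R,
    (forall i j : 'I_r, (i < j)%N -> x i < x j) ->
    (forall i j : 'I_r, (i < j)%N -> y i < y j) ->
    0 <= \det (\matrix_(j < r, k < r) L (x j - y k)).

Definition tnpow (R : realType) (a alpha : R) : R :=
  if a == 0 then 0 else powR a alpha.

(* Main.v *)
Require Import Defs.
From HB Require Import structures.
From mathcomp Require Import all_boot all_order all_algebra.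
From mathcomp Require Import all_classical all_reals exp.
From mathcomp Require Import sequences trigo.
From mathcomp Require Import ring lra.
Import Order.TTheory GRing.Theory Num.Theory.
Local Open Scope ring_scope.

Lemma det2 (R : comNzRingType) (M : 'M[R]_2) :
  \det M = M 0 0 * M 1 1 - M 0 1 * M 1 0.
Proof.
rewrite (expand_det_row _ ord0) !big_ord_recl big_ord0 /= addr0.
rewrite /cofactor !det_mx11 /= !mxE /=.
rewrite expr0 expr1 !mul1r mulN1r.
have -> : lift ord0 ord0 = 1 :> 'I_2 by apply/val_inj.
have -> : lift 1 0 = 0 :> 'I_2 by apply/val_inj.
ring.
Qed.
Lemma det3 (R : comNzRingType) (M : 'M[R]_3) :
  \det M = M 0 0 * (M 1 1 * M 2 2 - M 1 2 * M 2 1)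
         - M 0 1 * (M 1 0 * M 2 2 - M 1 2 * M 2 0)
         + M 0 2 * (M 1 0 * M 2 1 - M 1 1 * M 2 0).
Proof.
rewrite (expand_det_row _ ord0) !big_ord_recl big_ord0 /= addr0.
rewrite /cofactor !det2 /= !mxE /=.
pose g := fun i j : nat => M (inord i) (inord j).
have H : forall i j : 'I_3, M i j = g i j by move=> i j; rewrite /g !inord_val.
rewrite !H /= /bump /=.
rewrite expr0 expr1 expr2.
ring.
Qed.

Section T.
Variable R : realType.

Definition m2 (L : R -> R) x1 x2 y1 y2 :=
  L (x1 - y1) * L (x2 - y2) - L (x1 - y2) * L (x2 - y1).
Definition d3 (L : R -> R) x1 x2 x3 y1 y2 y3 :=
  L (x1 - y1) * (L (x2 - y2) * L (x3 - y3) - L (x2 - y3) * L (x3 - y2))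
  - L (x1 - y2) * (L (x2 - y1) * L (x3 - y3) - L (x2 - y3) * L (x3 - y1))
  + L (x1 - y3) * (L (x2 - y1) * L (x3 - y2) - L (x2 - y2) * L (x3 - y1)).

Lemma TN3_intro (L : R -> R) : (forall x, 0 <= L x) ->
  (forall x1 x2 y1 y2, x1 < x2 -> y1 < y2 -> 0 <= m2 L x1 x2 y1 y2) ->
  (forall x1 x2 x3 y1 y2 y3, x1 < x2 -> x2 < x3 -> y1 < y2 -> y2 < y3 ->
     0 <= d3 L x1 x2 x3 y1 y2 y3) -> TN 3 L.
Proof.
move=> H1 H2 H3 [|[|[|[|r]]]] // _ x y Hx Hy.
- by rewrite det_mx11 mxE.
- rewrite det2 !mxE; exact: H2 (Hx 0 1 isT) (Hy 0 1 isT).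
- rewrite det3 !mxE.
  exact: H3 (Hx 0 1 isT) (Hx 1 2 isT) (Hy 0 1 isT) (Hy 1 2 isT).
Qed.

Definition v2 (a b : R) := fun i : 'I_2 => if val i == 0%N then a else b.
Definition v3 (a b c : R) := fun i : 'I_3 =>
  if val i == 0%N then a else if val i == 1%N then b else c.

Lemma v2_inc a b : a < b -> forall i j : 'I_2, (i < j)%N -> v2 a b i < v2 a b j.
Proof. by move=> ab [[|[|i]] Hi] [[|[|j]] Hj]. Qed.

Lemma v3_inc a b c : a < b -> b < c ->
  forall i j : 'I_3, (i < j)%N -> v3 a b c i < v3 a b c j.
Proof.
move=> ab bc [[|[|[|i]] ] Hi] [[|[|[|j]]] Hj] //= _; rewrite /v3 /=; lra.
Qed.

Lemma TN3_ge0 (L : R -> R) : TN 3 L -> forall x, 0 <= L x.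
Proof.
move=> H x; have := H 1%N isT (fun _ => x) (fun _ => 0) _ _.
rewrite det_mx11 mxE subr0; apply; by case=> [[|i] Hi] [[|j] Hj].
Qed.

Lemma TN3_m2 (L : R -> R) : TN 3 L ->
  forall x1 x2 y1 y2, x1 < x2 -> y1 < y2 -> 0 <= m2 L x1 x2 y1 y2.
Proof.
move=> H x1 x2 y1 y2 hx hy.
have := H 2%N isT (v2 x1 x2) (v2 y1 y2) (@v2_inc _ _ hx) (@v2_inc _ _ hy).
by rewrite det2 !mxE.
Qed.

Lemma TN3_d3 (L : R -> R) : TN 3 L ->
  forall x1 x2 x3 y1 y2 y3, x1 < x2 -> x2 < x3 -> y1 < y2 -> y2 < y3 ->
     0 <= d3 L x1 x2 x3 y1 y2 y3.
Proof.
move=> H x1 x2 x3 y1 y2 y3 h1 h2 h3 h4.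
have := H 3%N isT (v3 x1 x2 x3) (v3 y1 y2 y3) (@v3_inc _ _ _ h1 h2) (@v3_inc _ _ _ h3 h4).
by rewrite det3 !mxE.
Qed.
End T.
Arguments m2 {R}. Arguments d3 {R}.
Arguments TN3_intro {R}. Arguments TN3_ge0 {R}. Arguments TN3_m2 {R}. Arguments TN3_d3 {R}.

Section P.
Variable R : realType.
Implicit Types a b t : R.

Lemma tnpowE a t : t != 0 -> tnpow a t = powR a t.
Proof. by move=> t0; rewrite /tnpow; case: eqP => // ->; rewrite powR0. Qed.

Lemma tangent a b t : 0 <= a -> 0 <= b -> 1 <= t ->
  powR b t + t * powR b (t - 1) * (a - b) <= powR a t.
Proof.
move=> a0 b0; rewrite le_eqVlt => /predU1P[<-|t1].
  rewrite subrr powRr0 !powRr1 //; lra.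
have t0 : 0 < t by lra.
pose q := t / (t - 1).
have q0 : 0 < q by rewrite /q divr_gt0 //; lra.
have pq : t^-1 + q^-1 = 1.
  rewrite /q invf_div; field; lra.
have Y := conjugate_powR a0 (powR_ge0 b (t - 1)) t0 q0 pq.
have E : powR (powR b (t - 1)) q = powR b t.
  rewrite -powRrM /q; congr powR; field; lra.
rewrite E in Y.
have Eb : b * powR b (t - 1) = powR b t by rewrite mulr_powRB1.
have H1 : t * (a * powR b (t - 1)) <= powR a t + (t - 1) * powR b t.
  have := ler_wpM2l (ltW t0) Y.
  have -> : t * (powR a t / t + powR b t / q) = powR a t + (t - 1) * powR b t.
    rewrite /q; field; lra.
  by [].
nra.
Qed.

Lemma powR_le a b t : 0 <= t -> 0 <= a -> a <= b -> powR a t <= powR b t.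
Proof.
move=> t0 a0 ab; apply: ge0_ler_powR => //; rewrite nnegrE //; lra.
Qed.

Lemma key X Y Z W B U D V t :
  0 <= Y <= X -> 0 <= W <= Z -> 0 <= U <= B -> 0 <= V <= D ->
  Y * W = B * D -> (B - U) * (D - V) <= (X - Y) * (Z - W) -> 1 <= t ->
  (powR B t - powR U t) * (powR D t - powR V t) <=
  (powR X t - powR Y t) * (powR Z t - powR W t).
Proof.
move=> /andP[Y0 YX] /andP[W0 WZ] /andP[U0 UB] /andP[V0 VD] E H t1.
have t0 : 0 <= t by lra.
have h1 := @tangent X Y t (le_trans Y0 YX) Y0 t1.
have h2 := @tangent Z W t (le_trans W0 WZ) W0 t1.
have h3 := @tangent U B t U0 (le_trans U0 UB) t1.
have h4 := @tangent V D t V0 (le_trans V0 VD) t1.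
have h5 := @powR_le U B t t0 U0 UB.
have h6 := @powR_le V D t t0 V0 VD.
have h6' : powR Y (t - 1) * powR W (t - 1) = powR B (t - 1) * powR D (t - 1).
  by rewrite -!powRM ?E //; lra.
have pY := powR_ge0 Y (t - 1). have pW := powR_ge0 W (t - 1).
have pB := powR_ge0 B (t - 1). have pD := powR_ge0 D (t - 1).
set yb := powR Y (t-1) in h1 h6' pY *. set wb := powR W (t-1) in h2 h6' pW *.
set bb := powR B (t-1) in h3 h6' pB *. set db := powR D (t-1) in h4 h6' pD *.
have S1 : (powR B t - powR U t) * (powR D t - powR V t) <=
          (t * bb * (B - U)) * (t * db * (D - V)).
  apply: ler_pM; lra.
have S2 : (t * bb * (B - U)) * (t * db * (D - V)) = t * t * (bb * db) * ((B - U) * (D - V)) by ring.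
have S3 : (t * yb * (X - Y)) * (t * wb * (Z - W)) = t * t * (yb * wb) * ((X - Y) * (Z - W)) by ring.
have S4 : t * t * (bb * db) * ((B - U) * (D - V)) <= t * t * (yb * wb) * ((X - Y) * (Z - W)).
  rewrite h6'; apply: ler_wpM2l => //; apply: mulr_ge0; [nra | nra].
have S5 : (t * yb * (X - Y)) * (t * wb * (Z - W)) <= (powR X t - powR Y t) * (powR Z t - powR W t).
  have g1 : 0 <= t * yb * (X - Y) by rewrite !mulr_ge0 //; lra.
  have g2 : 0 <= t * wb * (Z - W) by rewrite !mulr_ge0 //; lra.
  apply: ler_pM => //; lra.
rewrite S2 in S1; rewrite -S3 in S4.
exact: le_trans S1 (le_trans S4 S5).
Qed.
End P.


Section Pow.
Variable R : realType.

Lemma G3 (a b c d e f g h i : R) :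
  0 <= a -> 0 <= b -> 0 <= c -> 0 <= d -> 0 <= e -> 0 <= f -> 0 <= g -> 0 <= h -> 0 <= i ->
  0 <= a * e - b * d -> 0 <= e * i - f * h ->
  (0 < e -> (b * f - c * e) * (d * h - e * g) <= (a * e - b * d) * (e * i - f * h)) ->
  0 <= a * (e * i - f * h) - b * (d * i - f * g) + c * (d * h - e * g).
Proof.
move=> a0 b0 c0 d0 e0 f0 g0 h0 i0 m1 m2 H.
case: (ltgtP e 0) => [|ep|E0]; first lra.
- have := H ep.
  have Id : e * (a * (e * i - f * h) - b * (d * i - f * g) + c * (d * h - e * g)) =
     (a * e - b * d) * (e * i - f * h) - (b * f - c * e) * (d * h - e * g) by ring.
  move=> K; have : 0 <= e * (a * (e * i - f * h) - b * (d * i - f * g) + c * (d * h - e * g)).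
    rewrite Id; lra.
  by rewrite pmulr_rge0.
- rewrite E0 in m1 m2 *.
  have bd : b * d = 0.
    by have := mulr_ge0 b0 d0; rewrite mulr0 in m1; lra.
  have fh : f * h = 0.
    by have := mulr_ge0 f0 h0; rewrite mul0r in m2; lra.
  have -> : a * (0 * i - f * h) - b * (d * i - f * g) + c * (d * h - 0 * g) =
            - a * (f * h) - (b * d) * i + b * f * g + c * d * h by ring.
  rewrite bd fh; have := mulr_ge0 (mulr_ge0 b0 f0) g0; have := mulr_ge0 (mulr_ge0 c0 d0) h0.
  lra.
Qed.

Lemma TN3_pow (L : R -> R) t : 1 <= t -> TN 3 L -> TN 3 (fun x => tnpow (L x) t).
Proof.
move=> t1 HL.
have t0 : t != 0 by apply/eqP; lra.
have tp : 0 <= t by lra.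
have L0 := @TN3_ge0 _ L HL.
apply: TN3_intro.
- by move=> x; rewrite tnpowE // powR_ge0.
- move=> x1 x2 y1 y2 hx hy; rewrite /m2 !tnpowE // -!powRM //.
  have := @TN3_m2 _ L HL _ _ _ _ hx hy; rewrite /m2 => H.
  have := @powR_le _ (L (x1 - y2) * L (x2 - y1)) (L (x1 - y1) * L (x2 - y2)) t tp
    (mulr_ge0 (L0 _) (L0 _)); lra.
- move=> x1 x2 x3 y1 y2 y3 h1 h2 h3 h4; rewrite /d3 !tnpowE //.
  have D := @TN3_d3 _ L HL _ _ _ _ _ _ h1 h2 h3 h4; rewrite /d3 in D.
  have M1 := @TN3_m2 _ L HL _ _ _ _ h1 h3; have M2 := @TN3_m2 _ L HL _ _ _ _ h2 h4.
  have M3 := @TN3_m2 _ L HL _ _ _ _ h1 h4; have M4 := @TN3_m2 _ L HL _ _ _ _ h2 h3.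
  rewrite /m2 in M1 M2 M3 M4.
  move: D M1 M2 M3 M4.
  set a := L (x1 - y1); set b := L (x1 - y2); set c := L (x1 - y3).
  set d := L (x2 - y1); set e := L (x2 - y2); set f := L (x2 - y3).
  set g := L (x3 - y1); set h := L (x3 - y2); set i := L (x3 - y3).
  move=> D M1 M2 M3 M4.
  have a0 : 0 <= a := L0 _. have b0 : 0 <= b := L0 _. have c0 : 0 <= c := L0 _.
  have d0 : 0 <= d := L0 _. have e0 : 0 <= e := L0 _. have f0 : 0 <= f := L0 _.
  have g0 : 0 <= g := L0 _. have h0 : 0 <= h := L0 _. have i0 : 0 <= i := L0 _.
  have P2 : forall u v w z, 0 <= u -> 0 <= v -> 0 <= w -> 0 <= z -> w * z <= u * v ->
      0 <= powR u t * powR v t - powR w t * powR z t.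
    move=> u v w z u0 v0 w0 z0 le; rewrite -!powRM //.
    have := @powR_le _ (w * z) (u * v) t tp (mulr_ge0 w0 z0) le; lra.
  apply: G3; rewrite ?powR_ge0 //.
  + apply: P2 => //; lra.
  + apply: P2 => //; lra.
  + move=> ep.
    have ep' : 0 < e.
      rewrite lt_neqAle e0 andbT; apply/eqP => E0; move: ep; rewrite -E0 powR0 //; lra.
    have K : (b * f - c * e) * (d * h - e * g) <= (a * e - b * d) * (e * i - f * h).
      have Id : e * (a * (e * i - f * h) - b * (d * i - f * g) + c * (d * h - e * g)) =
        (a * e - b * d) * (e * i - f * h) - (b * f - c * e) * (d * h - e * g) by ring.
      have : 0 <= e * (a * (e * i - f * h) - b * (d * i - f * g) + c * (d * h - e * g)).
        exact: mulr_ge0.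
      rewrite Id; lra.
    have := @key _ (a * e) (b * d) (e * i) (f * h) (b * f) (c * e) (d * h) (e * g) t.
    rewrite !powRM //; apply => //.
    * rewrite mulr_ge0 //=; lra.
    * rewrite mulr_ge0 //=; lra.
    * rewrite mulr_ge0 //=; lra.
    * rewrite mulr_ge0 //=; lra.
    * ring.
Qed.
End Pow.

Section Gauss.
Variable R : realType.

Definition G (x : R) := expR (- x ^+ 2).

Lemma exp_lo (P Q : R) : expR Q * (P - Q) <= expR P - expR Q.
Proof.
have -> : expR P = expR Q * expR (P - Q) by rewrite -expRD; congr expR; ring.
have := expR_ge1Dx (P - Q); have := expR_gt0 Q; nra.
Qed.

Lemma exp_hi (P Q : R) : expR P - expR Q <= expR P * (P - Q).
Proof.
have -> : expR Q = expR P * expR (Q - P) by rewrite -expRD; congr expR; ring.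
have := expR_ge1Dx (Q - P); have := expR_gt0 P; nra.
Qed.

Lemma GM (z w : R) : G z * G w = expR (- z ^+ 2 - w ^+ 2).
Proof. by rewrite /G -expRD. Qed.

Lemma G_m2 x1 x2 y1 y2 : x1 < x2 -> y1 < y2 -> 0 <= m2 G x1 x2 y1 y2.
Proof.
move=> hx hy; rewrite /m2 !GM.
set P := - (x1 - y1) ^+ 2 - (x2 - y2) ^+ 2.
set Q := - (x1 - y2) ^+ 2 - (x2 - y1) ^+ 2.
have E : P - Q = 2 * (x2 - x1) * (y2 - y1) by rewrite /P /Q; ring.
have h : 0 <= P - Q by rewrite E; apply: mulr_ge0; [apply: mulr_ge0|]; lra.
have := exp_lo P Q; have := mulr_ge0 (expR_ge0 Q) h; lra.
Qed.

Lemma G_TN3 : TN 3 G.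
Proof.
apply: TN3_intro.
- by move=> x; rewrite /G expR_ge0.
- exact: G_m2.
- move=> x1 x2 x3 y1 y2 y3 h1 h2 h3 h4; rewrite /d3.
  have M1 := G_m2 _ _ _ _ h1 h3; have M2 := G_m2 _ _ _ _ h2 h4.
  have M3 := G_m2 _ _ _ _ h1 h4; have M4 := G_m2 _ _ _ _ h2 h3.
  rewrite /m2 in M1 M2 M3 M4.
  apply: G3; rewrite ?/G ?expR_ge0 // -?/(G _) //.
  move=> _; move: M1 M2 M3 M4; rewrite !GM.
  set P1 := - (x1 - y1) ^+ 2 - (x2 - y2) ^+ 2.
  set Q1 := - (x1 - y2) ^+ 2 - (x2 - y1) ^+ 2.
  set P2 := - (x2 - y2) ^+ 2 - (x3 - y3) ^+ 2.
  set Q2 := - (x2 - y3) ^+ 2 - (x3 - y2) ^+ 2.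
  set P3 := - (x1 - y2) ^+ 2 - (x2 - y3) ^+ 2.
  set Q3 := - (x1 - y3) ^+ 2 - (x2 - y2) ^+ 2.
  set P4 := - (x2 - y1) ^+ 2 - (x3 - y2) ^+ 2.
  set Q4 := - (x2 - y2) ^+ 2 - (x3 - y1) ^+ 2.
  move=> M1 M2 M3 M4.
  have E1 : P3 + P4 = Q1 + Q2 by rewrite /P3 /P4 /Q1 /Q2; ring.
  have E2 : (P3 - Q3) * (P4 - Q4) = (P1 - Q1) * (P2 - Q2)
    by rewrite /P1 /P2 /P3 /P4 /Q1 /Q2 /Q3 /Q4; ring.
  have d1 : 0 <= P1 - Q1.
    have -> : P1 - Q1 = 2 * (x2 - x1) * (y2 - y1) by rewrite /P1 /Q1; ring.
    apply: mulr_ge0; [apply: mulr_ge0|]; lra.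
  have d2 : 0 <= P2 - Q2.
    have -> : P2 - Q2 = 2 * (x3 - x2) * (y3 - y2) by rewrite /P2 /Q2; ring.
    apply: mulr_ge0; [apply: mulr_ge0|]; lra.
  have l1 := exp_lo P1 Q1; have l2 := exp_lo P2 Q2.
  have u3 := exp_hi P3 Q3; have u4 := exp_hi P4 Q4.
  have S1 : (expR P3 - expR Q3) * (expR P4 - expR Q4) <=
            (expR P3 * (P3 - Q3)) * (expR P4 * (P4 - Q4)) by apply: ler_pM.
  have S2 : (expR Q1 * (P1 - Q1)) * (expR Q2 * (P2 - Q2)) <=
            (expR P1 - expR Q1) * (expR P2 - expR Q2).
    apply: ler_pM => //; apply: mulr_ge0 => //; exact: expR_ge0.
  have S3 : (expR P3 * (P3 - Q3)) * (expR P4 * (P4 - Q4)) =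
            (expR Q1 * (P1 - Q1)) * (expR Q2 * (P2 - Q2)).
    have -> : (expR P3 * (P3 - Q3)) * (expR P4 * (P4 - Q4)) =
      (expR P3 * expR P4) * ((P3 - Q3) * (P4 - Q4)) by ring.
    rewrite -expRD E1 expRD E2; ring.
  rewrite S3 in S1; exact: le_trans S1 S2.
Qed.

Lemma G_pow_not (a : R) : a < 0 -> ~ TN 3 (fun x => tnpow (G x) a).
Proof.
move=> a0 H.
have := @TN3_m2 _ _ H 0 1 0 1 ltr01 ltr01.
rewrite /m2 !tnpowE ?lt_eqF // /G -!expRM !subrr !subr0 sub0r.
rewrite expr0n /= oppr0 mul0r expR0 mul1r sqrrN expr1n.
rewrite -expRD.
have : 1 < expR (- 1 * a + - 1 * a) by rewrite expR_gt1; lra.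
lra.
Qed.
End Gauss.

Section Sine.
Variable R : realType.

Definition inS (z : R) := (0 <= z) && (z <= pi).
Definition S (z : R) := if inS z then sin z else 0.

Lemma S_in {z : R} : inS z -> S z = sin z.
Proof. by rewrite /S => ->. Qed.
Lemma S_out {z : R} : ~~ inS z -> S z = 0.
Proof. by rewrite /S => /negbTE ->. Qed.
Lemma S_ge0 z : 0 <= S z.
Proof. rewrite /S; case: ifP => // /andP[h1 h2]; apply: sin_ge0_pi; lra. Qed.

Lemma sin_id (X1 X2 Y1 Y2 : R) :
  sin (X1 - Y1) * sin (X2 - Y2) - sin (X1 - Y2) * sin (X2 - Y1) =
  sin (X2 - X1) * sin (Y2 - Y1).
Proof. rewrite !sinB; ring. Qed.

Lemma inSP z : reflect (0 <= z <= pi) (inS z).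
Proof. exact: idP. Qed.

Lemma sin_le0_neg (z : R) : - pi <= z -> ~~ inS z -> z <= pi -> sin z <= 0.
Proof.
move=> h1 /inSP h2 h3.
have z0 : z <= 0 by apply/negP => /negP; rewrite -ltNge => z0; apply: h2; lra.
have := @sin_ge0_pi R (- z); rewrite sinN; move=> H; have := H ltac:(lra); lra.
Qed.

Lemma sin_le0_big (z : R) : 0 <= z -> ~~ inS z -> z <= pi *+ 2 -> sin z <= 0.
Proof.
move=> h1 /inSP h2 h3.
have z0 : pi <= z by apply/negP => /negP; rewrite -ltNge => z0; apply: h2; lra.
have E : sin z = - sin (z - pi) by rewrite -sinDpi subrK.
rewrite E; have := @sin_ge0_pi R (z - pi); rewrite mulr2n in h3; move=> H.
have := H ltac:(lra); lra.
Qed.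

Lemma S_m2 (x1 x2 y1 y2 : R) : x1 < x2 -> y1 < y2 -> 0 <= m2 S x1 x2 y1 y2.
Proof.
move=> hx hy; rewrite /m2.
have [Bin|Bout] := boolP (inS (x1 - y2)); last first.
  by rewrite (S_out Bout) mul0r subr0 mulr_ge0 // S_ge0.
have [Din|Dout] := boolP (inS (x2 - y1)); last first.
  by rewrite (S_out Dout) mulr0 subr0 mulr_ge0 // S_ge0.
move: (Bin) (Din) => /inSP B /inSP D.
have Ain : inS (x1 - y1) by apply/inSP; lra.
have Ein : inS (x2 - y2) by apply/inSP; lra.
rewrite !S_in // sin_id.
apply: mulr_ge0; apply: sin_ge0_pi; move/inSP: Ain; move/inSP: Ein; lra.
Qed.

Lemma aux1 (b f c e w r : R) : b * f = 0 -> 0 <= c -> 0 <= e -> 0 <= w -> 0 <= r ->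
  (b * f - c * e) * w <= r.
Proof.
move=> E c0 e0 w0 r0; rewrite E sub0r mulNr.
have := mulr_ge0 (mulr_ge0 c0 e0) w0; lra.
Qed.

Lemma aux2 (d h e g w r : R) : d * h = 0 -> 0 <= e -> 0 <= g -> 0 <= w -> 0 <= r ->
  w * (d * h - e * g) <= r.
Proof.
move=> E e0 g0 w0 r0; rewrite E sub0r mulrN.
have := mulr_ge0 w0 (mulr_ge0 e0 g0); lra.
Qed.

Lemma S_TN3 : TN 3 S.
Proof.
apply: TN3_intro; [exact: S_ge0 | exact: S_m2|].
move=> x1 x2 x3 y1 y2 y3 h1 h2 h3 h4; rewrite /d3.
have M1 := S_m2 _ _ _ _ h1 h3; have M2 := S_m2 _ _ _ _ h2 h4.
have M3 := S_m2 _ _ _ _ h1 h4; have M4 := S_m2 _ _ _ _ h2 h3.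
rewrite /m2 in M1 M2 M3 M4.
apply: G3; rewrite ?S_ge0 //.
move=> ep.
have r0 := mulr_ge0 M1 M2.
have [Bin|Bout] := boolP (inS (x1 - y2)); last first.
  by apply: aux1; rewrite ?S_ge0 // (S_out Bout) mul0r.
have [Fin|Fout] := boolP (inS (x2 - y3)); last first.
  by apply: aux1; rewrite ?S_ge0 // (S_out Fout) mulr0.
have [Din|Dout] := boolP (inS (x2 - y1)); last first.
  by apply: aux2; rewrite ?S_ge0 // (S_out Dout) mul0r.
have [Hin|Hout] := boolP (inS (x3 - y2)); last first.
  by apply: aux2; rewrite ?S_ge0 // (S_out Hout) mulr0.
move: (Bin) (Din) (Fin) (Hin) => /inSP B /inSP D /inSP F /inSP H.
have Ain : inS (x1 - y1) by apply/inSP; lra.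
have Iin : inS (x3 - y3) by apply/inSP; lra.
have Ein : inS (x2 - y2) by apply/inSP; lra.
move: (Ain) (Iin) (Ein) => /inSP A /inSP I /inSP E.
have K1 : S (x1 - y2) * S (x2 - y3) - S (x1 - y3) * S (x2 - y2) <=
          sin (x2 - x1) * sin (y3 - y2).
  rewrite -(sin_id x1 x2 y2 y3) (S_in Bin) (S_in Fin) (S_in Ein).
  have [Cin|Cout] := boolP (inS (x1 - y3)); first by rewrite (S_in Cin).
  rewrite (S_out Cout) mul0r.
  have := @sin_le0_neg (x1 - y3) ltac:(lra) Cout ltac:(lra).
  have : 0 <= sin (x2 - y2) by apply: sin_ge0_pi; lra.
  nra.
have K2 : S (x2 - y1) * S (x3 - y2) - S (x2 - y2) * S (x3 - y1) <=
          sin (x3 - x2) * sin (y2 - y1).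
  rewrite -(sin_id x2 x3 y1 y2) (S_in Din) (S_in Hin) (S_in Ein).
  have [Gin|Gout] := boolP (inS (x3 - y1)); first by rewrite (S_in Gin).
  rewrite (S_out Gout) mulr0.
  have := @sin_le0_big (x3 - y1) ltac:(lra) Gout ltac:(rewrite mulr2n; lra).
  have : 0 <= sin (x2 - y2) by apply: sin_ge0_pi; lra.
  nra.
have := ler_pM M3 M4 K1 K2.
rewrite (S_in Ain) (S_in Bin) (S_in Din) (S_in Ein) (S_in Fin) (S_in Hin) (S_in Iin).
rewrite (sin_id x1 x2 y1 y2) (sin_id x2 x3 y2 y3).
move=> Z; apply: (le_trans Z); rewrite le_eqVlt; apply/orP; left; apply/eqP; ring.
Qed.
End Sine.
Arguments S {R}. Arguments inS {R}. Arguments S_in {R z}. Arguments S_out {R z}.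
Arguments inSP {R z}. Arguments S_TN3 {R}.

Section SF.
Variable R : realType.

Lemma half_pow (a : R) : a < 1 -> 2^-1 < powR (2^-1) a.
Proof.
move=> a1.
have h0 : (0 : R) < 2^-1 by rewrite invr_gt0 ltr0n.
have L0 : ln (2^-1 : R) < 0 by apply: ln_lt0; rewrite h0 /= invf_lt1 // ltr1n.
rewrite /powR gt_eqF //.
rewrite -{1}(lnK h0) ltr_expR.
nra.
Qed.

Lemma S_pow_not (a : R) : 0 <= a -> a < 1 -> ~ TN 3 (fun x => tnpow (S x) a).
Proof.
move=> a0 a1 H.
pose q : R := pi / 4.
have q0 : 0 < q by rewrite /q divr_gt0 // pi_gt0.
pose x1 : R := 0. pose x2 := q. pose x3 := 2 * q.
pose y1 := - (2 * q). pose y2 := - q. pose y3 : R := 0.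
have HD := @TN3_d3 R _ H x1 x2 x3 y1 y2 y3 ltac:(rewrite /x1 /x2; lra)
  ltac:(rewrite /x2 /x3; lra) ltac:(rewrite /y1 /y2; lra) ltac:(rewrite /y2 /y3; lra).
rewrite /d3 /= in HD.
pose s := sin (pi / 4 : R).
have s0 : 0 < s by rewrite /s; apply: sin_gt0_pi; have := @pi_gt0 R; lra.
have cs : cos (pi / 4 : R) = s.
  by rewrite /s -cosBpihalf (_ : pi / 4 - pi / 2 = - (pi / 4)) ?cosN //; field.
have ss : s * s = 2^-1.
  have := @sin_pihalf R; rewrite (_ : pi / 2 = pi / 4 + pi / 4); last by field.
  rewrite sinD cs -/s => E; lra.
have V1 : forall z, z = pi / 2 -> tnpow (S z) a = 1.
  move=> z ->; rewrite S_in; last by apply/inSP; have := @pi_gt0 R; lra.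
  by rewrite sin_pihalf /tnpow oner_eq0 powR1.
have V0 : forall z, z = 0 \/ z = pi -> tnpow (S z) a = 0.
  move=> z [->|->]; rewrite S_in; try (apply/inSP; have := @pi_gt0 R; lra).
  - by rewrite sin0 /tnpow eqxx.
  - by rewrite sinpi /tnpow eqxx.
have Vs : forall z, z = pi / 4 \/ z = pi / 4 + pi / 2 -> tnpow (S z) a = powR s a.
  move=> z [->|->]; rewrite S_in; try (apply/inSP; have := @pi_gt0 R; lra).
  - by rewrite /tnpow gt_eqF.
  - by rewrite sinDpihalf cs /tnpow gt_eqF.
rewrite (V1 (x1 - y1)) in HD; last by rewrite /x1 /y1 /q; field.
rewrite (V1 (x2 - y2)) in HD; last by rewrite /x2 /y2 /q; field.
rewrite (V1 (x3 - y3)) in HD; last by rewrite /x3 /y3 /q; field.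
rewrite (V0 (x1 - y3)) in HD; last by left; rewrite /x1 /y3; ring.
rewrite (V0 (x3 - y1)) in HD; last by right; rewrite /x3 /y1 /q; field.
rewrite (Vs (x1 - y2)) in HD; last by left; rewrite /x1 /y2 /q; field.
rewrite (Vs (x2 - y3)) in HD; last by left; rewrite /x2 /y3 /q; field.
rewrite (Vs (x2 - y1)) in HD; last by right; rewrite /x2 /y1 /q; field.
rewrite (Vs (x3 - y2)) in HD; last by right; rewrite /x3 /y2 /q; field.
have P2 : powR s a * powR s a = powR (2^-1) a by rewrite -powRM ?ss // ltW.
have := @half_pow a a1.
move: HD; rewrite !mul1r !mulr1 !mul0r !mulr0 !subr0 P2.
lra.
Qed.
End SF.

Theorem mainTheorem18 (R : realType) :
  (forall alpha : R, alpha < 0 ->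
     exists L : R -> R, (forall x, 0 < L x) /\ TN 3 L /\
       ~ TN 3 (fun x => tnpow (L x) alpha))
  /\
  (forall alpha : R, 0 <= alpha ->
     ((forall L : R -> R, TN 3 L -> TN 3 (fun x => tnpow (L x) alpha))
      <-> 1 <= alpha)).
Proof.
split.
- move=> a a0; exists (@G R); split; first by move=> x; exact: expR_gt0.
  split; [exact: G_TN3 | exact: G_pow_not a0].
- move=> a a0; split.
  + move=> H; rewrite leNgt; apply/negP => a1.
    exact: (@S_pow_not R a a0 a1 (H _ S_TN3)).
  + by move=> a1 L HL; exact: TN3_pow a1 HL.
Qed.
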